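(* Let $p\geq5$ be a prime, $E\cong E_9$, $P$ of order $p$, $G=E\times P$. Let $\mathcal{A}$ be an $S$-ring over $G$ with $\mathcal{A}\cong_{\mathrm{Cay}}\mathcal{A}_i(M)$ for some $i\in\{1,\dots,11\}\setminus\{1,7,8\}$ and some $M\leq\mathrm{Aut}(P)$ such that $\mathcal{A}_i(M)$ is well-defined. Suppose $X,Y\in\mathcal{S}(\mathcal{A})$, $\langle X\rangle=\langle Y\rangle=G$ and $|X|=|Y|$. Then $X$ and $Y$ are rationally conjugate.
   Context: For a finite group $G$ with identity $e$ and $X\subseteq G$ write $\underline{X}=\sum_{x\in X}x$. An $S$-ring over $G$ is a subring $\mathcal{A}\subseteq\mathbb{Z}G$ spanned by $\{\underline{X}:X\in\mathcal{S}(\mathcal{A})\}$ for a partition $\mathcal{S}(\mathcal{A})$ of $G$ (basic sets) containing $\{e\}$ and closed under inversion. A Cayley isomorphism between $S$-rings $\mathcal{A},\mathcal{A}'$ over $G,G'$ is a group isomorphism $f:G\to G'$ with $\mathcal{S}(\mathcal{A})^f=\mathcal{S}(\mathcal{A}')$ (written $\cong_{\mathrm{Cay}}$). $X,Y\subseteq G$ are rationally conjugate if $Y=\{x^m:x\in X\}$ for some integer $m$ coprime to $|G|$. For $K\leq\mathrm{Aut}(G)$, $\mathrm{Cyc}(K,G)$ is the $S$-ring whose basic sets are the $K$-orbits. Write $E=\langle a\rangle\times\langle b\rangle$. For $K_0\trianglelefteq K\leq\mathrm{Aut}(E)$, $M_0\trianglelefteq M\leq\mathrm{Aut}(P)$ and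 an isomorphism $\psi:K/K_0\to M/M_0$, $W(K,K_0,M,M_0,\psi)=\{(\alpha,\beta)\in K\times M:\psi(\alpha K_0)=\beta M_0\}\leq\mathrm{Aut}(E\times P)$. The pairs $(K,K_0)$ number $1$–$11$ are (automorphisms given by images of $(a,b)$): 1. $K=\langle(a^2,b^2)\rangle$, $K_0=1$; 2. $K=\langle(a^2,b),(a,b^2)\rangle$, $K_0=\langle(a^2,b^2)\rangle$; 3. $K=\langle(a,ab)\rangle$, $K_0=1$; 4. $K=\langle(a^2,ab^2)\rangle$, $K_0=\langle(a^2,b^2)\rangle$; 5. $K=\langle(a^2,ab^2)\rangle$, $K_0=1$; 6. $K=\langle(b^2,a),(b,a)\rangle$, $K_0=\langle(a^2,b^2),(a^2,b)\rangle$; 7. $K=\langle(b^2,a)\rangle$, $K_0=\langle(a^2,b^2)\rangle$; 8. $K=\langle(b^2,a)\rangle$, $K_0=1$; 9. $K=\langle(ab,a^2b)\rangle$, $K_0=\langle(b^2,a)\rangle$; 10. $K=\langle(ab,a^2b)\rangle$, $K_0=\langle(a^2,b^2)\rangle$; 11. $K=\langle(ab,a^2b)\rangle$, $K_0=1$. $\mathcal{A}_i(M)$ is well-defined if $|K:K_0|$ divides $|M|$ for the pair of line $i$; then $M_0$ is the unique subgroup of the cyclic group $M$ with $M/M_0\cong K/K_0$ and $\mathcal{A}_i(M)=\mathrm{Cyc}(W(K,K_0,M,M_0,\psi_0),G)$ for a fixed isomorphism $\psi_0$ (different choices give Cayley isomorphic $S$-rings). *)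

(* Defs.v *)
From mathcomp Require Import all_boot all_order all_algebra all_fingroup.
Set Implicit Arguments. Unset Strict Implicit. Unset Printing Implicit Defensive.
Import GroupScope.

Section SRings.
Variable gT : finGroupType.

(* The group ring Z G is modelled by integer-valued functions on gT
   (supported on G);  \underline{X} is the indicator function of X and the
   product is convolution over G. *)
Definition uline (X : {set gT}) : {ffun gT -> int} :=
  [ffun x => Posz (x \in X)].

Definition conv (G : {set gT}) (f g : {ffun gT -> int}) : {ffun gT -> int} :=
  [ffun z => (\sum_(x in G) f x * g (x^-1 * z)%g)%R].

(* f lies in the Z-span of {uline X : X in S} (S a partition of G, f supported
   on G) iff f is constant on every member of S. *)
Definition in_span (G : {set gT}) (S : {set {set gT}}) (f : {ffun gT -> int}) :=
  (forall x, x \notin G -> f x = 0%R) /\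
  (forall X, X \in S -> forall x y, x \in X -> y \in X -> f x = f y).

(* S is the set of basic sets of an S-ring over G: a partition of G
   containing {e}, closed under inversion, whose span is a subring of Z G
   (it contains 1 = uline [set 1] and is closed under addition automatically;
   multiplicative closure is required on the spanning elements, which is
   equivalent by bilinearity). *)
Definition is_Sring (G : {set gT}) (S : {set {set gT}}) :=
  [/\ partition S G, [set 1] \in S,
      (forall X, X \in S -> X^-1 \in S)
    & (forall X Y, X \in S -> Y \in S -> in_span G S (conv G (uline X) (uline Y)))].

Definition rat_conj (G : {set gT}) (X Y : {set gT}) :=
  exists m : nat, coprime m #|G| /\ Y = [set x ^+ m | x in X].

Definition cay_iso (G : {set gT}) (S S' : {set {set gT}}) :=
  exists2 f, f \in Aut G & [set f @: X | X : {set gT} in S] = S'.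

(* The automorphisms of E sending (a, b) to (x, y) (a singleton set when
   E = <a> x <b> and such an automorphism exists). *)
Definition autg (E : {set gT}) (a b x y : gT) : {set {perm gT}} :=
  [set al in Aut E | (al a == x) && (al b == y)].

(* Generators of the pairs (K, K0) number 1 -- 11, as lists of images of (a, b). *)
Definition Kpair (i : nat) (a b : gT) : seq (gT * gT) * seq (gT * gT) :=
  match i with
  | 1 => ([:: (a ^+ 2, b ^+ 2)], [::])
  | 2 => ([:: (a ^+ 2, b); (a, b ^+ 2)], [:: (a ^+ 2, b ^+ 2)])
  | 3 => ([:: (a, a * b)], [::])
  | 4 => ([:: (a ^+ 2, a * b ^+ 2)], [:: (a ^+ 2, b ^+ 2)])
  | 5 => ([:: (a ^+ 2, a * b ^+ 2)], [::])
  | 6 => ([:: (b ^+ 2, a); (b, a)], [:: (a ^+ 2, b ^+ 2); (a ^+ 2, b)])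
  | 7 => ([:: (b ^+ 2, a)], [:: (a ^+ 2, b ^+ 2)])
  | 8 => ([:: (b ^+ 2, a)], [::])
  | 9 => ([:: (a * b, a ^+ 2 * b)], [:: (b ^+ 2, a)])
  | 10 => ([:: (a * b, a ^+ 2 * b)], [:: (a ^+ 2, b ^+ 2)])
  | 11 => ([:: (a * b, a ^+ 2 * b)], [::])
  | _ => ([::], [::])
  end.

Definition gen_auts (E : {set gT}) (a b : gT) (s : seq (gT * gT)) :
  {group {perm gT}} :=
  <<\bigcup_(v <- s) autg E a b v.1 v.2>>%G.

Definition Kgrp (E : {set gT}) (a b : gT) (i : nat) := gen_auts E a b (Kpair i a b).1.
Definition K0grp (E : {set gT}) (a b : gT) (i : nat) := gen_auts E a b (Kpair i a b).2.

(* Action of a pair (alpha, beta) in Aut(E) x Aut(P) on G = E x P: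
   e t |-> alpha(e) beta(t). *)
Definition pact (E P : {set gT}) (w : {perm gT} * {perm gT}) (x : gT) : gT :=
  w.1 (divgr E P x) * w.2 (remgr E P x).

Definition Wset (K K0 M M0 : {set {perm gT}})
  (psi : coset_of K0 -> coset_of M0) : {set {perm gT} * {perm gT}} :=
  [set w | [&& w.1 \in K, w.2 \in M & psi (coset K0 w.1) == coset M0 w.2]].

Definition cyc_sets (E P G : {set gT}) (W : {set {perm gT} * {perm gT}}) :
  {set {set gT}} :=
  [set [set pact E P w x | w in W] | x in G].

End SRings.
Arguments Wset {gT} K K0 M M0 psi.

(* Main.v *)
Require Import Defs.
From mathcomp Require Import all_boot all_order all_algebra all_fingroup all_solvable zify.
Set Implicit Arguments. Unset Strict Implicit. Unset Printing Implicit Defensive.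
Definition code := (nat * nat * nat * nat)%type.
Definition mulc (A B : code) : code :=
  let '(p,q,r,s) := A in let '(p',q',r',s') := B in
  ((p * p' + q * r') %% 3, (p * q' + q * s') %% 3, (r * p' + s * r') %% 3, (r * q' + s * s') %% 3).
Definition appc (A : code) (v : nat * nat) : nat * nat :=
  let '(p,q,r,s) := A in ((p * v.1 + r * v.2) %% 3, (q * v.1 + s * v.2) %% 3).
Definition id4 : code := (1,0,0,1).
Definition step (gs L : seq code) : seq code :=
  undup (L ++ [seq mulc A g | A <- L, g <- gs]).
Definition cl (gs : seq code) := iter 8 (step gs) [:: id4].
Definition vecs := [seq (i,j) | i <- iota 0 3, j <- iota 0 3].
Definition scal k (v : nat*nat) := ((k*v.1) %% 3, (k*v.2) %% 3).
Definition genv (L : seq code) v := has (fun A => all (fun k => appc A v != scal k v) (iota 0 3)) L.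
Definition conn (L : seq code) v v' := has (fun A => (appc A (scal 1 v) == v') || (appc A (scal 2 v) == v')) L.
Definition closed (L : seq code) := all (fun A => all (fun B => mulc A B \in L) L) L.
Definition check (L : seq code) := all (fun v => all (fun v' => genv L v ==> genv L v' ==> conn L v v') vecs) vecs.
Definition K2 := cl [:: (2,0,0,1); (1,0,0,2)].
Definition K3 := cl [:: (1,0,1,1)].
Definition K4 := cl [:: (2,0,1,2)].
Definition K6 := cl [:: (0,2,1,0); (0,1,1,0)].
Definition K9 := cl [:: (1,1,2,1)].

Lemma lin_mod p r v1 v2 i j : (v1 = i %[mod 3])%N -> (v2 = j %[mod 3])%N -> (p*v1 + r*v2 = p*i + r*j %[mod 3])%N.
Proof. by move=> h1 h2; rewrite -modnDm -modnMmr h1 modnMmr -[(r*v2) %% 3]modnMmr h2 modnMmr modnDm. Qed.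

Definition g2 : seq code := [:: (2,0,0,1); (1,0,0,2)].
Definition gm1 : seq code := [:: (2,0,0,2)].
Definition g3 : seq code := [:: (1,0,1,1)].
Definition g4 : seq code := [:: (2,0,1,2)].
Definition g9 : seq code := [:: (1,1,2,1)].
Definition g90 : seq code := [:: (0,2,1,0)].
Definition gnil : seq code := [::].

Definition small (A : code) := let '(p,q,r,s) := A in [&& p < 3, q < 3, r < 3 & s < 3].
Definition axis (v : nat * nat) := (v != (0,0)) && ((v.1 == 0) || (v.2 == 0)).
Definition diag (v : nat * nat) := (v.1 != 0) && (v.2 != 0).
Definition c1 (L L0 : seq code) (S : code) := all (fun v => axis v ==> all (fun A =>
  if A \in L0 then (appc A v == v) || (appc A v == scal 2 v)
  else (appc A v == appc S v) || (appc A v == scal 2 (appc S v))) L) vecs.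
Definition c3 (L L0 : seq code) (S : code) := all (fun A => (A \notin L0) ==> (mulc A S \in L0)) L.
Definition c4 (L0 : seq code) (S : code) := all (fun v => all (fun u => diag v ==> diag u ==>
  has (fun A => appc A v == u) L0 && has (fun A => appc (mulc A S) v == u) L0) vecs) vecs.
Definition check6 (L : seq code) := all (fun v => all (fun v' => genv L v ==> genv L v' ==>
  [|| conn L v v', axis v && diag v' | diag v && axis v']) vecs) vecs.
Definition g6 : seq code := [:: (0,2,1,0); (0,1,1,0)].
Definition g60 : seq code := [:: (2,0,0,2); (2,0,0,1)].
Definition S6 : code := (0,1,1,0).
Lemma arith6 (a b c d : nat) : a <= 4*b -> 4*c <= d -> 2*b <= c -> 0 < b -> a = d -> False.
Proof. lia. Qed.
Import GroupScope.
Section Ebasics.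
Variables (gT : finGroupType) (E : {group gT}) (a b : gT).
Hypotheses (defE : <[a]> \x <[b]> = E) (oa : #[a] = 3) (ob : #[b] = 3).
Definition cc i j := a ^+ i * b ^+ j.

Lemma cab : commute a b.
Proof.
case/dprodP: defE => _ _ cAB _.
exact/commute_sym/((centsP cAB) b (cycle_id b) a (cycle_id a)).
Qed.

Lemma tiab : <[a]> :&: <[b]> = 1.
Proof. by case/dprodP: defE. Qed.

Lemma cc_mod i j : cc i j = cc (i %% 3) (j %% 3).
Proof.
rewrite /cc; congr (_ * _).
  by rewrite -{1}(expg_mod_order a i) oa.
by rewrite -{1}(expg_mod_order b j) ob.
Qed.


Lemma cc_mul i j k l : cc i j * cc k l = cc (i + k) (j + l).
Proof.
rewrite /cc !expgD -!mulgA; congr (_ * _); rewrite !mulgA; congr (_ * _).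
exact: commuteX2 (commute_sym cab).
Qed.

Lemma cc_exp i j n : cc i j ^+ n = cc (i * n) (j * n).
Proof.
elim: n => [|n IH]; first by rewrite /cc !muln0 !expg0 mulg1.
by rewrite expgSr IH cc_mul !mulnS [_ + i]addnC [_ + j]addnC.
Qed.

Lemma cc_inj i j k l : cc i j = cc k l -> i = k %[mod 3] /\ j = l %[mod 3].
Proof.
move=> h.
move: (congr1 (fun z => (a^+k)^-1 * z * (b^+j)^-1) h) => /=.
rewrite /cc mulKg !mulgA mulgK => e1.
have : b ^+ l * (b ^+ j)^-1 \in <[a]> :&: <[b]>.
  by rewrite inE -{1}e1 !groupM ?groupV ?mem_cycle.
rewrite tiab inE -e1 => /eqP e2.
have e3 : b ^+ l * (b ^+ j)^-1 == 1 by rewrite -e1 e2.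
have e4 : a ^+ k == a ^+ i by rewrite eq_mulVg1 e2.
have e5 : b ^+ l == b ^+ j by rewrite eq_mulgV1.
move: e4 e5; rewrite !eq_expg_mod_order oa ob => /eqP -> /eqP ->; done.
Qed.

Lemma cc_in i j : cc i j \in E.
Proof.
case/dprodP: defE => _ <- _ _.
by apply: mem_mulg; apply: mem_cycle.
Qed.

Lemma E_cc z : z \in E -> exists i j, [/\ i < 3, j < 3 & z = cc i j].
Proof.
case/dprodP: defE => _ <- _ _ /mulsgP [x y /cycleP [i ->] /cycleP [j ->] ->].
exists (i %% 3), (j %% 3); rewrite !ltn_mod; split => //.
by rewrite -cc_mod.
Qed.

Lemma cc_eq1 i j : (cc i j == 1) = (i %% 3 == 0) && (j %% 3 == 0).
Proof.
apply/eqP/andP => [h | [/eqP hi /eqP hj]].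
  have h' : cc i j = cc 0 0 by rewrite h /cc !expg0 mulg1.
  by case: (cc_inj h') => -> ->.
by rewrite cc_mod hi hj /cc !expg0 mulg1.
Qed.

Lemma cc_eqmod i j k l : i = k %[mod 3] -> j = l %[mod 3] -> cc i j = cc k l.
Proof. by move=> h1 h2; rewrite cc_mod h1 h2 -cc_mod. Qed.

Lemma a_cc : a = cc 1 0. Proof. by rewrite /cc expg1 expg0 mulg1. Qed.
Lemma b_cc : b = cc 0 1. Proof. by rewrite /cc expg1 expg0 mul1g. Qed.
Lemma aE : a \in E. Proof. by rewrite a_cc cc_in. Qed.
Lemma bE : b \in E. Proof. by rewrite b_cc cc_in. Qed.

Definition hascode (al : {perm gT}) (A : code) :=
  let '(p,q,r,s) := A in (al a == cc p q) && (al b == cc r s).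

Lemma aut_cc al p q r s i j : al \in Aut E -> al a = cc p q -> al b = cc r s ->
  al (cc i j) = cc (p*i + r*j) (q*i + s*j).
Proof.
move=> h ha hb.
rewrite /cc -(autmE h) morphM ?groupX ?aE ?bE // !morphX ?aE ?bE //= !autmE ha hb.
by rewrite -!/(cc _ _) !cc_exp cc_mul.
Qed.

Lemma aut_app al A v : al \in Aut E -> hascode al A ->
  al (cc v.1 v.2) = cc (appc A v).1 (appc A v).2.
Proof.
case: A => [[[p q] r] s] h /andP [/eqP ha /eqP hb].
by rewrite (aut_cc _ _ h ha hb) /= [RHS]cc_mod !modn_mod -cc_mod.
Qed.

Lemma aut_mulc al be A B : al \in Aut E -> be \in Aut E -> hascode al A -> hascode be B ->
  hascode (al * be) (mulc A B).
Proof.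
case: A => [[[p q] r] s]; case: B => [[[p' q'] r'] s'] hal hbe /andP [/eqP ha /eqP hb] hB.
move: (hB) => /andP [/eqP ha' /eqP hb'].
rewrite /= !permM ha hb !(aut_cc _ _ hbe ha' hb').
by apply/andP; split; apply/eqP; apply: cc_eqmod; rewrite modn_mod; congr (_ %% 3); lia.
Qed.

Lemma hascode_uniq al be A : al \in Aut E -> be \in Aut E -> hascode al A -> hascode be A -> al = be.
Proof.
move=> hal hbe hA hB; apply: (eq_Aut hal hbe) => z /E_cc [i [j [_ _ ->]]].
by rewrite (aut_app (i,j) hal hA) (aut_app (i,j) hbe hB).
Qed.

Definition Kup (L : seq code) : {set {perm gT}} := [set al in Aut E | has (hascode al) L].

Lemma hascode1 : hascode 1 id4.
Proof. by rewrite /hascode /= !perm1 -a_cc -b_cc !eqxx. Qed.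

Lemma Kup_group L : id4 \in L -> closed L -> group_set (Kup L).
Proof.
move=> hid hcl; apply/group_setP; split.
  apply/setIdP; split; first exact: group1.
  by apply/hasP; exists id4 => //; apply: hascode1.
move=> x y /setIdP [hx /hasP [A hA cx]] /setIdP [hy /hasP [B hB cy]].
apply/setIdP; split; first exact: groupM.
apply/hasP; exists (mulc A B); last exact: aut_mulc.
exact: (allP (allP hcl A hA) B hB).
Qed.

Lemma Kup_sub L : Kup L \subset Aut E.
Proof. by apply/subsetP => x /setIdP []. Qed.

Lemma Kup_code L al : al \in Kup L -> exists2 A, A \in L & hascode al A.
Proof. by case/setIdP => _ /hasP. Qed.

Definition inK (H : {set {perm gT}}) A := exists2 al, al \in H & hascode al A.

Lemma cl_inK (H : {group {perm gT}}) gs : H \subset Aut E ->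
  {in gs, forall A, inK H A} -> {in cl gs, forall A, inK H A}.
Proof.
move=> sH hgs; rewrite /cl; elim: 8 => [|n IH] /= A.
  by rewrite inE => /eqP ->; exists 1 => //; apply: hascode1.
rewrite /step mem_undup mem_cat => /orP [/IH // | /allpairsP [[A' g] [hA' hg ->]]] /=.
case: (IH _ hA') => al hal cal; case: (hgs _ hg) => be hbe cbe.
exists (al * be); first by rewrite groupM.
by apply: aut_mulc => //; apply: (subsetP sH).
Qed.

Lemma mem_vecs i j : i < 3 -> j < 3 -> (i, j) \in vecs.
Proof. by move=> hi hj; apply/allpairsP; exists (i, j); rewrite !mem_iota. Qed.

Definition injc (A : code) := all (fun v => all (fun w => (appc A v == appc A w) ==> (v == w)) vecs) vecs.

Definition dec (z : gT) : nat * nat :=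
  odflt (0, 0) (omap (fun v : 'I_3 * 'I_3 => (nat_of_ord v.1, nat_of_ord v.2))
     [pick v : 'I_3 * 'I_3 | cc v.1 v.2 == z]).

Lemma decP z : z \in E -> cc (dec z).1 (dec z).2 = z.
Proof.
rewrite /dec; case: pickP => [v /eqP //| none] /E_cc [i [j [hi hj ez]]].
by move: (none (Ordinal hi, Ordinal hj)); rewrite /= ez eqxx.
Qed.

Section MkAut.
Variable A : code.
Hypothesis hA : injc A.
Let f z := cc (appc A (dec z)).1 (appc A (dec z)).2.

Lemma f_cc i j : f (cc i j) = cc (appc A (i, j)).1 (appc A (i, j)).2.
Proof.
have := decP (cc_in i j); rewrite /f; case: (dec _) => i' j' /= /cc_inj [h1 h2].
case: A => [[[p q] r] s] /=; apply: cc_eqmod; rewrite !modn_mod; exact: lin_mod.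
Qed.

Lemma f_inj : {in E &, injective f}.
Proof.
move=> x y /E_cc [i [j [hi hj ->]]] /E_cc [k [l [hk hl ->]]].
rewrite !f_cc => /cc_inj [].
have e1 z : z %% 3 = z %% 3 %% 3 by rewrite modn_mod.
case: A hA => [[[p q] r] s] hA' /=; rewrite !modn_mod => h1 h2.
have := allP (allP hA' _ (mem_vecs hi hj)) _ (mem_vecs hk hl).
by rewrite /= h1 h2 eqxx /= => /eqP [-> ->].
Qed.

Lemma f_sub : f @: E \subset E.
Proof. by apply/subsetP => z /imsetP [y _ ->]; apply: cc_in. Qed.

Lemma mk_aut : exists2 al, al \in Aut E & hascode al A.
Proof.
exists (perm_in f_inj f_sub).
  rewrite inE perm_in_on /=; apply/morphicP => x y hx hy.
  rewrite !perm_inE ?groupM //.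
  case/E_cc: hx => [i [j [_ _ ->]]]; case/E_cc: hy => [k [l [_ _ ->]]].
  rewrite cc_mul !f_cc cc_mul.
  by case: (A) => [[[p q] r] s] /=; apply: cc_eqmod; rewrite !modn_mod modnDm; congr (_ %% 3); lia.
rewrite /hascode; case E1 : A => [[[p q] r] s].
rewrite !perm_inE ?aE ?bE // {1}a_cc {1}b_cc !f_cc E1 /=.
by apply/andP; split; apply/eqP; apply: cc_eqmod; rewrite modn_mod; congr (_ %% 3); lia.
Qed.
End MkAut.

Definition pairc (A : code) : gT * gT := let '(p,q,r,s) := A in (cc p q, cc r s).

Lemma gen_auts_sub (L gs : seq code) : id4 \in L -> closed L -> all (mem L) gs ->
  gen_auts E a b (map pairc gs) \subset Kup L.
Proof.
move=> hid hcl hgs; rewrite /gen_auts /= -[Kup L]/(gval (group (Kup_group hid hcl))) gen_subG.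
rewrite bigcup_seq; apply/bigcupsP => v /mapP [A hA ->]; apply/subsetP => al.
move/setIdP => [hal hxy]; apply/setIdP; split => //; apply/hasP; exists A; first exact: (allP hgs).
by case: A {hA} hxy => [[[p q] r] s] /=.
Qed.

Lemma gen_auts_Aut s : gen_auts E a b s \subset Aut E.
Proof.
rewrite /gen_auts /= gen_subG bigcup_seq; apply/bigcupsP => v _.
by apply/subsetP => al /setIdP [].
Qed.

Lemma gen_inK (gs : seq code) : all injc gs -> {in gs, forall A, inK (gen_auts E a b (map pairc gs)) A}.
Proof.
move=> hinj A hA; case: (mk_aut (allP hinj A hA)) => al hal cal.
exists al => //; apply: mem_gen; rewrite bigcup_seq; apply/bigcupP.
exists (pairc A); first exact: map_f.
by apply/setIdP; split => //; case: A cal {hA} => [[[p q] r] s].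
Qed.

Lemma gen_auts_subH (H : {group {perm gT}}) (gs : seq code) : H \subset Aut E ->
  {in gs, forall A, inK H A} -> gen_auts E a b (map pairc gs) \subset H.
Proof.
move=> sH hgs; rewrite /gen_auts /= gen_subG bigcup_seq; apply/bigcupsP => v /mapP [A hA ->].
apply/subsetP => al /setIdP [hal hxy]; case: (hgs A hA) => be hbe cbe.
suff -> : al = be by [].
apply: (hascode_uniq hal (subsetP sH _ hbe) _ cbe).
by case: A {hA cbe} hxy => [[[p q] r] s].
Qed.


Variables (P G : {group gT}) (p : nat).
Variables (K K0 M M0 : {group {perm gT}}) (psi : {morphism K / K0 >-> coset_of M0}).
Hypotheses (pr_p : prime p) (p5 : 5 <= p) (cardP : #|P| = p) (defG : E \x P = G).
Hypotheses (sKA : K \subset Aut E) (sK0K : K0 \subset K) (sMA : M \subset Aut P)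
  (sM0M : M0 \subset M) (iKM : #|M : M0| = #|K : K0|) (isoK : isom (K / K0) (M / M0) psi).

Lemma cPE : P \subset 'C(E). Proof. by case/dprodP: defG. Qed.
Lemma tiEP : E :&: P = 1. Proof. by case/dprodP: defG. Qed.
Lemma EPG : E * P = G. Proof. by case/dprodP: defG. Qed.

Lemma comm_et e t : e \in E -> t \in P -> commute e t.
Proof. by move=> he ht; apply/commute_sym; apply: (centsP cPE). Qed.

Lemma decG x : x \in G -> exists e t, [/\ e \in E, t \in P & x = e * t].
Proof. by rewrite -EPG => /mulsgP [e t he ht ->]; exists e, t. Qed.

Lemma etG e t : e \in E -> t \in P -> e * t \in G.
Proof. by move=> he ht; rewrite -EPG mem_mulg. Qed.

Lemma cardE : #|E| = 9.
Proof. by rewrite -(dprod_card defE) -!orderE oa ob. Qed.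

Lemma cardG : #|G| = (9 * p)%N.
Proof. by rewrite -(dprod_card defG) cardE cardP. Qed.

Lemma MN : M \subset 'N(M0).
Proof.
apply: sub_abelian_norm sM0M.
apply: (abelianS sMA); apply: Aut_cyclic_abelian; apply: prime_cyclic; by rewrite cardP.
Qed.

Lemma KN : K \subset 'N(K0).
Proof.
have h1 : #|K / K0| = #|K : K0| by rewrite (isom_card isoK) card_quotient ?MN.
rewrite card_quotient_subnorm in h1.
have s1 : K0 \subset 'N_K(K0) by rewrite subsetI sK0K normG.
have h2 : #|'N_K(K0)| = #|K|.
  by rewrite -(Lagrange s1) -(Lagrange sK0K) h1.
have : 'N_K(K0) == K :> {set _} by rewrite eqEcard subsetIl h2 leqnn.
by move/eqP => <-; apply: subsetIr.
Qed.

Definition W := Wset K K0 M M0 psi.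

Lemma memW w : (w \in W) = [&& w.1 \in K, w.2 \in M & psi (coset K0 w.1) == coset M0 w.2].
Proof. by rewrite inE. Qed.

Lemma W_mul w w' : w \in W -> w' \in W -> (w.1 * w'.1, w.2 * w'.2) \in W.
Proof.
rewrite !memW /= => /and3P [h1 h2 /eqP h3] /and3P [h1' h2' /eqP h3'].
rewrite !groupM //=.
have n1 := subsetP KN _ h1; have n1' := subsetP KN _ h1'.
have n2 := subsetP MN _ h2; have n2' := subsetP MN _ h2'.
rewrite !morphM ?mem_quotient // h3 h3'.
by []. Qed.

Lemma W_inv w : w \in W -> (w.1^-1, w.2^-1) \in W.
Proof.
rewrite !memW /= => /and3P [h1 h2 /eqP h3].
rewrite !groupV h1 h2 /=.
have n1 := subsetP KN _ h1; have n2 := subsetP MN _ h2.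
by rewrite !morphV ?mem_quotient // h3.
Qed.

Lemma W_aut w : w \in W -> w.1 \in Aut E /\ w.2 \in Aut P.
Proof. by rewrite memW => /and3P [h1 h2 _]; split; [apply: (subsetP sKA) | apply: (subsetP sMA)]. Qed.

Lemma pactE w e t : e \in E -> t \in P -> pact E P w (e * t) = w.1 e * w.2 t.
Proof. by move=> he ht; rewrite /pact divgrMid ?remgrMid ?tiEP. Qed.


Lemma autX (H : {group gT}) (be : {perm gT}) t m : be \in Aut H -> t \in H -> be (t ^+ m) = be t ^+ m.
Proof. by move=> hb ht; rewrite -(autmE hb) morphX. Qed.

Lemma aut1 (H : {group gT}) (be : {perm gT}) : be \in Aut H -> be 1 = 1.
Proof. by move=> hb; rewrite -(autmE hb) morph1. Qed.

Lemma autM (H : {group gT}) (be : {perm gT}) x y : be \in Aut H -> x \in H -> y \in H -> be (x * y) = be x * be y.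
Proof. by move=> hb hx hy; rewrite -(autmE hb) morphM. Qed.

Lemma pact_comp w w' e t : w \in W -> w' \in W -> e \in E -> t \in P ->
  pact E P w' (pact E P w (e * t)) = pact E P (w.1 * w'.1, w.2 * w'.2) (e * t).
Proof.
move=> hw hw' he ht; case: (W_aut hw) => h1 h2.
by rewrite !pactE ?Aut_closed //= !permM.
Qed.

Definition Orb x := [set pact E P w x | w in W].

Lemma Orb_pact w0 z : w0 \in W -> z \in G -> Orb (pact E P w0 z) = Orb z.
Proof.
move=> hw0 /decG [e [t [he ht ->]]]; apply/setP => u; apply/imsetP/imsetP.
  case=> w hw ->; exists (w0.1 * w.1, w0.2 * w.2); first exact: (W_mul hw0 hw).
  exact: (pact_comp hw0 hw he ht).
case=> w hw ->; have hi := W_inv hw0; have hw' := W_mul hi hw.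
exists (w0.1^-1 * w.1, w0.2^-1 * w.2) => //.
rewrite (pact_comp hw0 hw' he ht) /= !mulKVg.
by case: w {hw hw'}.
Qed.

Lemma Orb_exp z m : z \in G -> Orb (z ^+ m) = [set u ^+ m | u in Orb z].
Proof.
move=> /decG [e [t [he ht ->]]]; rewrite /Orb -imset_comp; apply: eq_in_imset => w hw /=.
case: (W_aut hw) => h1 h2.
rewrite (expgMn _ (comm_et he ht)) (pactE w (groupX m he) (groupX m ht)) (pactE w he ht).
rewrite (expgMn _ (comm_et (Aut_closed h1 he) (Aut_closed h2 ht))).
by rewrite (autX _ h1 he) (autX _ h2 ht).
Qed.

Lemma Orb_sub x : x \in G -> Orb x \subset G.
Proof.
move=> /decG [e [t [he ht ->]]]; apply/subsetP => u /imsetP [w hw ->].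
by case: (W_aut hw) => h1 h2; rewrite (pactE w he ht) etG ?Aut_closed.
Qed.

Lemma orderE3 e : e \in E -> e ^+ 3 = 1.
Proof.
case/E_cc => i [j [_ _ ->]]; rewrite cc_exp cc_mod !modnMl.
by rewrite /cc !expg0 mulg1.
Qed.

Lemma gen_Orb x : x \in G -> <<Orb x>> = G ->
  exists e t, [/\ e \in E, t \in P, x = e * t, t != 1 &
     exists2 al, al \in K & al e \notin <[e]>].
Proof.
move=> hx hgen; case: (decG hx) => e [t [he ht ex]]; exists e, t; split => //.
  apply/eqP => t1; have : G \subset E.
    rewrite -hgen gen_subG; apply/subsetP => u /imsetP [w hw ->].
    case: (W_aut hw) => h1 h2; rewrite ex t1 mulg1.
    by rewrite -[e]mulg1 pactE // (aut1 h2) mulg1 Aut_closed.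
  move/subset_leq_card; rewrite cardG cardE; lia.
case: (boolP [exists al in K, al e \notin <[e]>]) => [/exists_inP [al h1 h2] | ]; first by exists al.
rewrite negb_exists_in => /forall_inP hall.
have sub1 : G \subset <[e]> <*> P.
  rewrite -hgen gen_subG; apply/subsetP => u /imsetP [w hw ->].
  case: (W_aut hw) => h1 h2; rewrite ex (pactE w he ht).
  have hw1 : w.1 \in K by move: hw; rewrite memW => /and3P [].
  apply: groupM; first by apply: (subsetP (joing_subl _ _)); rewrite -[_ \in _]negbK hall.
  by apply: (subsetP (joing_subr _ _)); rewrite Aut_closed.
have cm : commute <[e]> P.
  apply: centC; have sEC : E \subset 'C(P) by rewrite centsC cPE.
  by apply: subset_trans sEC; rewrite cycle_subG.
move: (subset_leq_card sub1); rewrite comm_joingE // cardG.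
have h3 : #|<[e]> * P| <= 3 * p.
  have := mul_cardG <[e]> P; rewrite cardP.
  have : #[e] <= 3 by apply: dvdn_leq => //; rewrite order_dvdn orderE3.
  rewrite -orderE => he3 hmc.
  have : 0 < #|<[e]> :&: P| by apply/card_gt0P; exists 1; rewrite group1.
  move=> hpos; have : #|<[e]> * P| <= #|<[e]> * P| * #|<[e]> :&: P| by rewrite leq_pmulr.
  rewrite -hmc => h4; apply: (leq_trans h4); exact: leq_mul.
move=> h5; have := leq_trans h5 h3; lia.
Qed.

Lemma genP u : u \in P -> u != 1 -> <[u]> = P.
Proof.
move=> hu nu; apply/eqP; rewrite eqEcard cycle_subG hu /= cardP -orderE.
have : #[u] %| p by rewrite -cardP order_dvdG.
have n1 : #[u] != 1%N by rewrite eqn_leq negb_and -ltnNge order_gt1 nu.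
by case/(prime_nt_dvdP pr_p n1) => ->.
Qed.

Lemma expP u m : u \in P -> u ^+ m = u ^+ (m %% p).
Proof. by move=> hu; rewrite (expg_mod _ (_ : u ^+ p = 1)) // -cardP expg_cardG. Qed.

Lemma expE3 e m : e \in E -> e ^+ m = e ^+ (m %% 3).
Proof. by move=> he; rewrite (expg_mod _ (orderE3 he)). Qed.

Lemma conj_of x y e t e' t' al eps :
  x = e * t -> y = e' * t' -> e \in E -> e' \in E -> t \in P -> t' \in P ->
  t != 1 -> t' != 1 -> al \in K -> (eps == 1%N) || (eps == 2%N) -> al (e ^+ eps) = e' ->
  exists m, coprime m #|G| /\ Orb y = [set u ^+ m | u in Orb x].
Proof.
move=> ex ey he he' ht ht' nt nt' hal heps hae.
have nal := subsetP KN _ hal.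
have : psi (coset K0 al) \in M / M0.
  by rewrite -(isom_im isoK); apply: mem_morphim; rewrite mem_quotient.
case/morphimP => be _ hbe hpsi.
have hw0 : (al, be) \in W by rewrite memW /= hal hbe /= hpsi.
have hbA : be \in Aut P by apply: (subsetP sMA).
set u := be t.
have hu : u \in P by rewrite Aut_closed.
have nu : u != 1.
  apply/eqP => h; move/eqP: nt; apply; apply: (@perm_inj _ be).
  by rewrite -/u h (aut1 hbA).
have : t' \in <[u]> by rewrite genP.
case/cycleP => k ek.
have nk : k %% p != 0.
  apply/eqP => h; move/eqP: nt'; apply; by rewrite ek (expP _ hu) h expg0.
have co3 : coprime 3 p.
  rewrite coprime_sym (prime_coprime _ pr_p); apply/negP => /(dvdn_leq (isT : (0 < 3)%N)) h.
  by move: (leq_trans p5 h).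
set m := chinese 3 p eps k.
have m3 : m %% 3 = eps.
  rewrite /m (chinese_modl co3) modn_small //; by case/orP: heps => /eqP ->.
have mp : m %% p = k %% p by rewrite /m (chinese_modr co3).
exists m; split.
  have c3 : coprime m 3 by rewrite -coprime_modl m3; case/orP: heps => /eqP ->.
  have cp : coprime m p.
    by rewrite -coprime_modl mp coprime_sym (prime_coprime _ pr_p) /dvdn modn_mod nk.
  by rewrite cardG (_ : 9 = 3 * 3)%N // !coprimeMr c3 cp.
have hxG : x \in G by rewrite ex etG.
have hxm : x ^+ m \in G by rewrite groupX.
rewrite -Orb_exp // -(Orb_pact hw0 hxm); congr Orb.
rewrite ex (expgMn _ (comm_et he ht)) (pactE _ (groupX m he) (groupX m ht)) /=.
rewrite (expE3 _ he) m3 hae (autX _ hbA ht) -/u (expP _ hu) mp -(expP _ hu) -ek.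
by [].
Qed.

Lemma cc_scal v k : cc v.1 v.2 ^+ k = cc (scal k v).1 (scal k v).2.
Proof. by rewrite cc_exp /scal /=; apply: cc_eqmod; rewrite modn_mod mulnC. Qed.

Section WithL.
Variable L : seq code.
Hypotheses (hKL : K \subset Kup L) (hLK : {in L, forall A, inK K A}).

Lemma genv_of v al : al \in K -> al (cc v.1 v.2) \notin <[cc v.1 v.2]> -> genv L v.
Proof.
move=> hal nin; have hal' := subsetP hKL _ hal.
case: (Kup_code hal') => A hA cA.
apply/hasP; exists A => //; apply/allP => k _; apply/negP => /eqP h; apply: (negP nin).
by rewrite (aut_app _ (subsetP (Kup_sub L) _ hal') cA) h -cc_scal mem_cycle.
Qed.

Lemma conn_of v v' : conn L v v' -> exists al eps,
  [/\ al \in K, (eps == 1%N) || (eps == 2%N) & al (cc v.1 v.2 ^+ eps) = cc v'.1 v'.2].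
Proof.
case/hasP => A hA h; case: (hLK hA) => al hal cA.
have hA' := subsetP sKA _ hal.
case/orP: h => /eqP h; [exists al, 1%N | exists al, 2%N]; split => //;
  by rewrite cc_scal (aut_app _ hA' cA) h.
Qed.

Lemma key_gen : check L -> forall x y, x \in G -> y \in G -> <<Orb x>> = G -> <<Orb y>> = G ->
  exists m, coprime m #|G| /\ Orb y = [set u ^+ m | u in Orb x].
Proof.
move=> hc x y hx hy gx gy.
case: (gen_Orb hx gx) => e [t [he ht ex nt [al hal nal]]].
case: (gen_Orb hy gy) => e' [t' [he' ht' ey nt' [al' hal' nal']]].
case/E_cc: (he) => i [j [hi hj ee]]; case/E_cc: (he') => i' [j' [hi' hj' ee']].
have g1 : genv L (i, j) by apply: (genv_of hal); rewrite /= -ee.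
have g2 : genv L (i', j') by apply: (genv_of hal'); rewrite /= -ee'.
have := allP (allP hc _ (mem_vecs hi hj)) _ (mem_vecs hi' hj'); rewrite g1 g2 /= => hcn.
case: (conn_of hcn) => be [eps [hbe heps hbee]].
by apply: (conj_of ex ey he he' ht ht' nt nt' hbe heps); rewrite ee ee'.
Qed.
End WithL.

Lemma code_uniq al A B : hascode al A -> hascode al B -> small A -> small B -> A = B.
Proof.
case: A => [[[p1 q] r] s]; case: B => [[[p' q'] r'] s'] /andP [/eqP h1 /eqP h2] /andP [/eqP h3 /eqP h4].
case/and4P => hp hq hr hs; case/and4P => hp' hq' hr' hs'.
move: h1 h2; rewrite h3 h4 => /cc_inj [e1 e2] /cc_inj [e3 e4].
by move: e1 e2 e3 e4; rewrite !modn_small // => -> -> -> ->.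
Qed.

Lemma mulEP_inj e1 e2 t1 t2 : e1 \in E -> e2 \in E -> t1 \in P -> t2 \in P ->
  e1 * t1 = e2 * t2 -> e1 = e2 /\ t1 = t2.
Proof.
move=> h1 h2 h3 h4 h.
have : e2^-1 * e1 \in E :&: P.
  rewrite inE groupM ?groupV //=.
  have -> : e2^-1 * e1 = t2 * t1^-1.
    by apply: (canRL (mulgK _)); rewrite -mulgA h mulKg.
  by rewrite groupM ?groupV.
rewrite tiEP inE -eq_mulVg1 => /eqP e; split => //.
by move: h; rewrite e => /mulgI.
Qed.

Lemma autP_inj (g g' : {perm gT}) t : g \in Aut P -> g' \in Aut P -> t \in P -> t != 1 ->
  g t = g' t -> g = g'.
Proof.
move=> hg hg' ht nt h; apply: (eq_Aut hg hg') => z.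
rewrite -(genP ht nt) => /cycleP [k ->].
by rewrite !(autX _ _ ht) ?h.
Qed.

Section Case6.
Variables (L L0 : seq code) (S : code).
Hypotheses (hKL : K \subset Kup L) (hLK : {in L, forall A, inK K A})
  (hK0L : K0 \subset Kup L0) (hL0K : {in L0, forall A, inK K0 A}).
Hypotheses (hSL : S \in L) (hSS : mulc S S == id4) (hSL0 : S \notin L0)
  (smL0 : all small L0) (smS : small S) (hc1 : c1 L L0 S) (hc3 : c3 L L0 S) (hc4 : c4 L0 S).

Lemma s_ex : exists2 s, s \in K & hascode s S.
Proof. exact: hLK. Qed.

Lemma inK0_of al A : al \in K -> hascode al A -> A \in L0 -> al \in K0.
Proof.
move=> hal cA hA; case: (hL0K hA) => al0 hal0 c0.
suff -> : al = al0 by [].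
exact: (hascode_uniq (subsetP sKA _ hal) (subsetP sKA _ (subsetP sK0K _ hal0)) cA c0).
Qed.

Variables (s : {perm gT}).
Hypotheses (hs : s \in K) (cs : hascode s S).

Lemma ss1 : s * s = 1.
Proof.
have hA := subsetP sKA _ hs.
apply: (hascode_uniq (groupM hA hA) (group1 _) _ (hascode1)).
by rewrite -(eqP hSS); apply: aut_mulc.
Qed.

Lemma s_notK0 : s \notin K0.
Proof.
apply/negP => h; case: (Kup_code (subsetP hK0L _ h)) => A hA cA.
have e := code_uniq cs cA smS (allP smL0 _ hA).
by move: hSL0; rewrite e hA.
Qed.

Lemma cosetK al : al \in K -> exists2 A, A \in L /\ hascode al A &
  (A \in L0 /\ coset K0 al = 1) \/ (A \notin L0 /\ coset K0 al = coset K0 s).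
Proof.
move=> hal; case: (Kup_code (subsetP hKL _ hal)) => A hA cA; exists A => //.
case: (boolP (A \in L0)) => hA0; [left | right]; split => //.
  by apply: coset_id; apply: (inK0_of hal cA hA0).
have h1 : al * s \in K0.
  apply: (inK0_of (groupM hal hs)); first exact: aut_mulc (subsetP sKA _ hal) (subsetP sKA _ hs) cA cs.
  by have := allP hc3 _ hA; rewrite hA0.
have n1 := subsetP KN _ hal; have n2 := subsetP KN _ hs.
have : coset K0 (al * s) = 1 by apply: coset_id.
rewrite morphM // => /(canRL (mulgK _)); rewrite mul1g => ->.
have si : s^-1 = s by rewrite -[LHS]mulg1 -ss1 mulKg.
by rewrite -morphV // si.
Qed.


Lemma bs_ex : exists2 bs, bs \in M & coset M0 bs = psi (coset K0 s) /\ bs \notin M0.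
Proof.
have ns := subsetP KN _ hs.
have : psi (coset K0 s) \in M / M0.
  by rewrite -(isom_im isoK); apply: mem_morphim; rewrite mem_quotient.
case/morphimP => bs hbN hbM e; exists bs => //; split; first by rewrite e.
apply/negP => hb0; have e2 : psi (coset K0 s) = 1 by rewrite e; apply: coset_id hb0.
move/eqP: e2.
rewrite (morph_injm_eq1 (isom_inj isoK)) ?mem_quotient // => /eqP h.
by move/negP: s_notK0; apply; apply: (coset_idr ns h).
Qed.

Variables (bs : {perm gT}).
Hypotheses (hbs : bs \in M) (ebs : coset M0 bs = psi (coset K0 s)).

Lemma W_snd w : w \in W -> exists2 A, A \in L /\ hascode w.1 A &
  (A \in L0 /\ w.2 \in M0) \/ (A \notin L0 /\ w.2 * bs^-1 \in M0).
Proof.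
rewrite memW => /and3P [h1 h2 /eqP h3].
have n2 := subsetP MN _ h2; have nb := subsetP MN _ hbs.
case: (cosetK h1) => A cA hc; exists A => //.
case: hc => [[hA0 e] | [hA0 e]]; [left | right]; split => //.
  by apply: (coset_idr n2); rewrite -h3 e morph1.
apply: coset_idr; first by rewrite groupM ?groupV.
have e3 : coset M0 w.2 = coset M0 bs by rewrite -h3 e ebs.
by rewrite morphM ?groupV // morphV //= e3 mulgV.
Qed.


Lemma orb_upper x e t v : x = e * t -> e \in E -> t \in P -> v \in vecs ->
  e = cc v.1 v.2 -> axis v -> #|Orb x| <= 4 * #|M0|.
Proof.
move=> ex he ht hv ev hax.
pose F := fun u : gT * {perm gT} => u.1 * u.2 t.
have hsA := subsetP sKA _ hs.
have sub : Orb x \subset F @: setX [set e; e ^+ 2] M0 :|: F @: setX [set s e; (s e) ^+ 2] (M0 :* bs).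
  apply/subsetP => z /imsetP [w hw ->]; rewrite ex (pactE w he ht).
  have [h1 h2] := W_aut hw.
  case: (W_snd hw) => A [hAL cA] hc.
  have := allP (implyP (allP hc1 v hv) hax) A hAL.
  have ea : w.1 e = cc (appc A v).1 (appc A v).2 by rewrite ev (aut_app _ h1 cA).
  have es : s e = cc (appc S v).1 (appc S v).2 by rewrite ev (aut_app _ hsA cs).
  case: hc => [[hA0 hm] | [hA0 hm]]; [rewrite hA0 | rewrite (negbTE hA0)] => /orP [/eqP h | /eqP h].
  - apply/setUP; left; apply/imsetP; exists (w.1 e, w.2) => //.
    by rewrite in_setX hm !inE ea h -ev eqxx.
  - apply/setUP; left; apply/imsetP; exists (w.1 e, w.2) => //.
    by rewrite in_setX hm !inE ea h ev cc_scal eqxx orbT.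
  - apply/setUP; right; apply/imsetP; exists (w.1 e, w.2) => //.
    by rewrite in_setX mem_rcoset hm !inE ea h es eqxx.
  - apply/setUP; right; apply/imsetP; exists (w.1 e, w.2) => //.
    by rewrite in_setX mem_rcoset hm !inE ea h es cc_scal eqxx orbT.
apply: (leq_trans (subset_leq_card sub)).
have hU (A B : {set gT}) : #|A :|: B| <= #|A| + #|B| by rewrite -cardsUI leq_addr.
apply: (leq_trans (hU _ _)).
apply: (leq_trans (leq_add (leq_imset_card _ _) (leq_imset_card _ _))).
rewrite !cardsX card_rcoset.
have c2 (c : gT) : #|[set c; c ^+ 2]| <= 2 by rewrite cards2; case: (c != _).
apply: (leq_trans (leq_add (leq_mul (c2 e) (leqnn _)) (leq_mul (c2 (s e)) (leqnn _)))).
by rewrite -mulnDl.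
Qed.


Lemma orb_lower y e t v : y = e * t -> e \in E -> t \in P -> t != 1 -> v \in vecs ->
  e = cc v.1 v.2 -> diag v -> 4 * #|M| <= #|Orb y|.
Proof.
move=> ey he ht nt hv ev hdg.
pose D := [set cc (nat_of_ord u.1).+1 (nat_of_ord u.2).+1 | u in [set: 'I_2 * 'I_2]].
have cD : #|D| = 4.
  rewrite card_in_imset; first by rewrite cardsT card_prod card_ord.
  move=> [u1 u2] [u1' u2'] _ _ /= /cc_inj [].
  have lt3 (u : 'I_2) : (u.+1 < 3)%N by case: u => [[|[|]]].
  rewrite !modn_small ?lt3 // => -[h1] [h2].
  by congr pair; apply: val_inj.
have sD : D \subset E by apply/subsetP => c /imsetP [u _ ->]; apply: cc_in.
pose F := fun u : gT * {perm gT} => u.1 * u.2 t.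
have inj : {in setX D M &, injective F}.
  move=> [c g] [c' g'] /setXP [hc hg] /setXP [hc' hg'] /=.
  have hgA := subsetP sMA _ hg; have hgA' := subsetP sMA _ hg'.
  case/(mulEP_inj (subsetP sD _ hc) (subsetP sD _ hc') (Aut_closed hgA ht) (Aut_closed hgA' ht)).
  by move=> -> /(autP_inj hgA hgA' ht nt) ->.
have sub : F @: setX D M \subset Orb y.
  apply/subsetP => z /imsetP [[c g] /setXP [hc hg] ->] /=.
  case/imsetP: hc => [[i j] _ ->] /=.
  have hu : (i.+1, j.+1) \in vecs by apply: mem_vecs; [case: i => [[|[|]]] | case: j => [[|[|]]]].
  have := implyP (implyP (allP (allP hc4 v hv) _ hu) hdg) isT.
  case/andP => /hasP [A0 hA0 /eqP e0] /hasP [A1 hA1 /eqP e1].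
  have ng := subsetP MN _ hg.
  case: (boolP (g \in M0)) => hg0.
    case: (hL0K hA0) => al0 hal0 c0.
    have hal0K := subsetP sK0K _ hal0; have hal0A := subsetP sKA _ hal0K.
    apply/imsetP; exists (al0, g).
      by rewrite memW /= hal0K hg /= (coset_id hal0) (coset_id hg0) morph1.
    by rewrite ey (pactE _ he ht) /= ev (aut_app _ hal0A c0) e0.
  have eg : coset M0 g = psi (coset K0 s).
    have : coset M0 g \in M / M0 by rewrite mem_quotient.
    rewrite -(isom_im isoK) => /morphimP [k _ hk eg0].
    case/morphimP: hk => al' hal'N hal' ek0.
    have ek' : k = coset K0 al' := ek0.
    case: (cosetK hal') => A' _ [[_ ek] | [_ ek]]; first last.
      by rewrite eg0 ek' ek.
    have : coset M0 g = 1 by rewrite eg0 ek' ek morph1.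
    by move/(coset_idr ng) => h; move: hg0; rewrite h.
  case: (hL0K hA1) => al1 hal1 c1'.
  have hal1K := subsetP sK0K _ hal1; have hal1A := subsetP sKA _ hal1K.
  have hsA := subsetP sKA _ hs.
  apply/imsetP; exists (al1 * s, g).
    rewrite memW /= groupM ?hg //= coset_kerl // eg.
    by [].
  rewrite ey (pactE _ he ht) /= ev (aut_app _ (groupM hal1A hsA) (aut_mulc hal1A hsA c1' cs)) e1.
  by [].
rewrite -cD -cardsX -(card_in_imset inj); exact: subset_leq_card.
Qed.

End Case6.

Lemma key6 (L L0 : seq code) (S : code) :
  K \subset Kup L -> {in L, forall A, inK K A} -> K0 \subset Kup L0 -> {in L0, forall A, inK K0 A} ->
  S \in L -> mulc S S == id4 -> S \notin L0 -> all small L0 -> small S ->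
  c1 L L0 S -> c3 L L0 S -> c4 L0 S -> check6 L ->
  forall x y, x \in G -> y \in G -> <<Orb x>> = G -> <<Orb y>> = G -> #|Orb x| = #|Orb y| ->
  exists m, coprime m #|G| /\ Orb y = [set u ^+ m | u in Orb x].
Proof.
move=> hKL hLK hK0L hL0K hSL hSS hSL0 smL0 smS hc1 hc3 hc4 hc x y hx hy gx gy cxy.
case: (hLK _ hSL) => s hs cs.
case: (bs_ex hK0L hSL0 smL0 smS hs cs) => bs hbs [ebs nbs].
have hM : 2 * #|M0| <= #|M|.
  have i2 : 1 < #|M : M0|.
    by rewrite indexg_gt1; apply/negP => h; move: nbs; rewrite (subsetP h bs hbs).
  by rewrite -(Lagrange sM0M) [in X in _ <= X]mulnC leq_mul2r i2 orbT.
have pos : 0 < #|M0| := cardG_gt0 _.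
case: (gen_Orb hx gx) => e [t [he ht ex nt [al hal nal]]].
case: (gen_Orb hy gy) => e' [t' [he' ht' ey nt' [al' hal' nal']]].
case/E_cc: (he) => i [j [hi hj ee]]; case/E_cc: (he') => i' [j' [hi' hj' ee']].
have g1 : genv L (i, j) by apply: (genv_of hKL hal); rewrite /= -ee.
have g2 : genv L (i', j') by apply: (genv_of hKL hal'); rewrite /= -ee'.
have := allP (allP hc _ (mem_vecs hi hj)) _ (mem_vecs hi' hj'); rewrite g1 g2 /=.
case/or3P => [hcn | /andP [ax dg] | /andP [dg ax]].
- case: (conn_of hLK hcn) => be [eps [hbe heps hbee]].
  by apply: (conj_of ex ey he he' ht ht' nt nt' hbe heps); rewrite ee ee'.
- have u := orb_upper hKL hL0K hSS hc1 hc3 hs cs hbs ebs ex he ht (mem_vecs hi hj) ee ax.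
  have l := orb_lower hKL hL0K hSS hc3 hc4 hs cs ey he' ht' nt' (mem_vecs hi' hj') ee' dg.
  by case: (arith6 u l hM pos cxy).
- have u := orb_upper hKL hL0K hSS hc1 hc3 hs cs hbs ebs ey he' ht' (mem_vecs hi' hj') ee' ax.
  have l := orb_lower hKL hL0K hSS hc3 hc4 hs cs ex he ht nt (mem_vecs hi hj) ee dg.
  by case: (arith6 u l hM pos (esym cxy)).
Qed.

Lemma final_gen (S : {set {set gT}}) X Y :
  (forall x y, x \in G -> y \in G -> <<Orb x>> = G -> <<Orb y>> = G -> #|Orb x| = #|Orb y| ->
     exists m, coprime m #|G| /\ Orb y = [set u ^+ m | u in Orb x]) ->
  is_Sring G S -> cay_iso G S (cyc_sets E P G W) -> X \in S -> Y \in S ->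
  <<X>> = G -> <<Y>> = G -> #|X| = #|Y| -> rat_conj G X Y.
Proof.
move=> key [part _ _ _] [f hf hfS] hX hY gX gY cXY.
have sub Z : Z \in S -> Z \subset G.
  move=> hZ; case/and3P: part => /eqP <- _ _; exact: bigcup_sup.
have fim Z : Z \in S -> exists2 x, x \in G & f @: Z = Orb x.
  move=> hZ; have : f @: Z \in cyc_sets E P G W by rewrite -hfS; apply/imsetP; exists Z.
  by case/imsetP => x hx ->; exists x.
have fgen Z : Z \in S -> <<Z>> = G -> <<f @: Z>> = G.
  move=> hZ gZ; have e : autm hf @* Z = f @: Z by rewrite morphimEsub ?sub.
  by rewrite -e -morphim_gen ?sub // gZ im_autm.
have fcard (Z : {set gT}) : #|f @: Z| = #|Z| by apply/eqP/imset_injP => u v _ _; apply: perm_inj.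
case: (fim X hX) => x hx ex; case: (fim Y hY) => y hy ey.
have := key x y hx hy; rewrite -ex -ey fgen // fgen // !fcard cXY.
case=> // m [cm hm]; exists m; split => //.
apply: (@imset_inj _ _ f (@perm_inj _ f)); rewrite hm -imset_comp -imset_comp.
apply: eq_in_imset => z hz /=; symmetry; apply: (autX _ hf); exact: (subsetP (sub X hX)).
Qed.
End Ebasics.

Lemma main_case (gT : finGroupType) (E P G : {group gT}) (a b : gT) (p : nat)
  (i : nat) (M M0 : {group {perm gT}})
  (psi : {morphism Kgrp E a b i / K0grp E a b i >-> coset_of M0})
  (S : {set {set gT}}) (X Y : {set gT}) (gens gens0 : seq code) :
  (Kpair i a b).1 = map (pairc a b) gens -> (Kpair i a b).2 = map (pairc a b) gens0 ->
  all injc gens -> id4 \in cl gens -> closed (cl gens) -> all (mem (cl gens)) gens ->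
  all (mem (cl gens)) gens0 -> check (cl gens) ->
  prime p -> 5 <= p ->
  <[a]> \x <[b]> = E -> #[a] = 3 -> #[b] = 3 ->
  #|P| = p -> E \x P = G ->
  M \subset Aut P ->
  #|Kgrp E a b i : K0grp E a b i| %| #|M| ->
  M0 \subset M -> #|M : M0| = #|Kgrp E a b i : K0grp E a b i| ->
  isom (Kgrp E a b i / K0grp E a b i) (M / M0) psi ->
  is_Sring G S ->
  cay_iso G S (cyc_sets E P G (Wset (Kgrp E a b i) (K0grp E a b i) M M0 psi)) ->
  X \in S -> Y \in S -> <<X>> = G -> <<Y>> = G -> #|X| = #|Y| ->
  rat_conj G X Y.
Proof.
move=> e1 e2 hinj hid hcl hgl hg0 hc pr_p p5 defE oa ob cardP defG sMA _ sM0M iKM isoK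
  hS hcay hX hY gX gY cXY.
have sKA : Kgrp E a b i \subset Aut E by apply: gen_auts_Aut.
have hLK : {in cl gens, forall A, inK a b (Kgrp E a b i) A}.
  apply: (cl_inK defE oa ob sKA) => A hA; rewrite /Kgrp e1; exact: (gen_inK defE oa ob hinj hA).
have hKL : Kgrp E a b i \subset Kup E a b (cl gens).
  by rewrite /Kgrp e1; apply: gen_auts_sub.
have sK0K : K0grp E a b i \subset Kgrp E a b i.
  rewrite /K0grp e2; apply: (gen_auts_subH defE oa ob sKA) => A hA; apply: hLK; exact: (allP hg0).
apply: (final_gen _ hS hcay hX hY gX gY cXY) => x y hx hy gx gy _.
exact: (key_gen defE oa ob pr_p p5 cardP defG sKA sK0K sMA sM0M iKM isoK hKL hLK hc hx hy gx gy).
Qed.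


Lemma main_case6 (gT : finGroupType) (E P G : {group gT}) (a b : gT) (p : nat)
  (i : nat) (M M0 : {group {perm gT}})
  (psi : {morphism Kgrp E a b i / K0grp E a b i >-> coset_of M0})
  (S : {set {set gT}}) (X Y : {set gT}) (gens gens0 : seq code) (S6 : code) :
  (Kpair i a b).1 = map (pairc a b) gens -> (Kpair i a b).2 = map (pairc a b) gens0 ->
  all injc gens -> id4 \in cl gens -> closed (cl gens) -> all (mem (cl gens)) gens ->
  all (mem (cl gens)) gens0 -> check6 (cl gens) ->
  all injc gens0 -> id4 \in cl gens0 -> closed (cl gens0) -> all (mem (cl gens0)) gens0 ->
  S6 \in cl gens -> mulc S6 S6 == id4 -> S6 \notin cl gens0 -> all small (cl gens0) -> small S6 ->
  c1 (cl gens) (cl gens0) S6 -> c3 (cl gens) (cl gens0) S6 -> c4 (cl gens0) S6 ->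
  prime p -> 5 <= p ->
  <[a]> \x <[b]> = E -> #[a] = 3 -> #[b] = 3 ->
  #|P| = p -> E \x P = G ->
  M \subset Aut P ->
  #|Kgrp E a b i : K0grp E a b i| %| #|M| ->
  M0 \subset M -> #|M : M0| = #|Kgrp E a b i : K0grp E a b i| ->
  isom (Kgrp E a b i / K0grp E a b i) (M / M0) psi ->
  is_Sring G S ->
  cay_iso G S (cyc_sets E P G (Wset (Kgrp E a b i) (K0grp E a b i) M M0 psi)) ->
  X \in S -> Y \in S -> <<X>> = G -> <<Y>> = G -> #|X| = #|Y| ->
  rat_conj G X Y.
Proof.
move=> e1 e2 hinj hid hcl hgl hg0 hc hinj0 hid0 hcl0 hgl0 hSL hSS hSL0 smL0 smS hc1 hc3 hc4
  pr_p p5 defE oa ob cardP defG sMA _ sM0M iKM isoK hS hcay hX hY gX gY cXY.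
have sKA : Kgrp E a b i \subset Aut E by apply: gen_auts_Aut.
have sK0A : K0grp E a b i \subset Aut E by apply: gen_auts_Aut.
have hLK : {in cl gens, forall A, inK a b (Kgrp E a b i) A}.
  apply: (cl_inK defE oa ob sKA) => A hA; rewrite /Kgrp e1; exact: (gen_inK defE oa ob hinj hA).
have hKL : Kgrp E a b i \subset Kup E a b (cl gens).
  by rewrite /Kgrp e1; apply: gen_auts_sub.
have hL0K : {in cl gens0, forall A, inK a b (K0grp E a b i) A}.
  apply: (cl_inK defE oa ob sK0A) => A hA; rewrite /K0grp e2; exact: (gen_inK defE oa ob hinj0 hA).
have hK0L : K0grp E a b i \subset Kup E a b (cl gens0).
  by rewrite /K0grp e2; apply: gen_auts_sub.
have sK0K : K0grp E a b i \subset Kgrp E a b i.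
  rewrite /K0grp e2; apply: (gen_auts_subH defE oa ob sKA) => A hA; apply: hLK; exact: (allP hg0).
apply: (final_gen _ hS hcay hX hY gX gY cXY).
exact: (key6 defE oa ob pr_p p5 cardP defG sKA sK0K sMA sM0M iKM isoK hKL hLK hK0L hL0K hSL hSS hSL0 smL0 smS hc1 hc3 hc4 hc).
Qed.

Theorem lemma3p6 (gT : finGroupType) (E P G : {group gT}) (a b : gT) (p : nat)
  (i : nat) (M M0 : {group {perm gT}})
  (psi : {morphism Kgrp E a b i / K0grp E a b i >-> coset_of M0})
  (S : {set {set gT}}) (X Y : {set gT}) :
  prime p -> 5 <= p ->
  <[a]> \x <[b]> = E -> #[a] = 3 -> #[b] = 3 ->
  #|P| = p -> E \x P = G ->
  i \in [:: 2; 3; 4; 5; 6; 9; 10; 11] ->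
  M \subset Aut P ->
  #|Kgrp E a b i : K0grp E a b i| %| #|M| ->
  M0 \subset M -> #|M : M0| = #|Kgrp E a b i : K0grp E a b i| ->
  isom (Kgrp E a b i / K0grp E a b i) (M / M0) psi ->
  is_Sring G S ->
  cay_iso G S (cyc_sets E P G (Wset (Kgrp E a b i) (K0grp E a b i) M M0 psi)) ->
  X \in S -> Y \in S -> <<X>> = G -> <<Y>> = G -> #|X| = #|Y| ->
  rat_conj G X Y.
Proof.
move=> pr_p p5 defE oa ob cardP defG hi.
move: hi psi; rewrite !inE.
case/orP => [/eqP -> psi | ].
  refine (@main_case gT E P G a b p _ M M0 psi S X Y g2 gm1 _ _ _ _ _ _ _ _ pr_p p5 defE oa ob cardP defG);
  [ by rewrite /= /cc ?expg0 ?expg1 ?mulg1 ?mul1g | by rewrite /= /cc ?expg0 ?expg1 ?mulg1 ?mul1g | by vm_compute .. ].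
case/orP => [/eqP -> psi | ].
  refine (@main_case gT E P G a b p _ M M0 psi S X Y g3 gnil _ _ _ _ _ _ _ _ pr_p p5 defE oa ob cardP defG);
  [ by rewrite /= /cc ?expg0 ?expg1 ?mulg1 ?mul1g | by rewrite /= /cc ?expg0 ?expg1 ?mulg1 ?mul1g | by vm_compute .. ].
case/orP => [/eqP -> psi | ].
  refine (@main_case gT E P G a b p _ M M0 psi S X Y g4 gm1 _ _ _ _ _ _ _ _ pr_p p5 defE oa ob cardP defG);
  [ by rewrite /= /cc ?expg0 ?expg1 ?mulg1 ?mul1g | by rewrite /= /cc ?expg0 ?expg1 ?mulg1 ?mul1g | by vm_compute .. ].
case/orP => [/eqP -> psi | ].
  refine (@main_case gT E P G a b p _ M M0 psi S X Y g4 gnil _ _ _ _ _ _ _ _ pr_p p5 defE oa ob cardP defG);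
  [ by rewrite /= /cc ?expg0 ?expg1 ?mulg1 ?mul1g | by rewrite /= /cc ?expg0 ?expg1 ?mulg1 ?mul1g | by vm_compute .. ].
case/orP => [/eqP -> psi | ].
  refine (@main_case6 gT E P G a b p _ M M0 psi S X Y g6 g60 S6 _ _ _ _ _ _ _ _ _ _ _ _ _ _ _ _ _ _ _ _ pr_p p5 defE oa ob cardP defG);
  [ by rewrite /= /cc ?expg0 ?expg1 ?mulg1 ?mul1g | by rewrite /= /cc ?expg0 ?expg1 ?mulg1 ?mul1g | by vm_compute .. ].
case/orP => [/eqP -> psi | ].
  refine (@main_case gT E P G a b p _ M M0 psi S X Y g9 g90 _ _ _ _ _ _ _ _ pr_p p5 defE oa ob cardP defG);
  [ by rewrite /= /cc ?expg0 ?expg1 ?mulg1 ?mul1g | by rewrite /= /cc ?expg0 ?expg1 ?mulg1 ?mul1g | by vm_compute .. ].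
case/orP => [/eqP -> psi | ].
  refine (@main_case gT E P G a b p _ M M0 psi S X Y g9 gm1 _ _ _ _ _ _ _ _ pr_p p5 defE oa ob cardP defG);
  [ by rewrite /= /cc ?expg0 ?expg1 ?mulg1 ?mul1g | by rewrite /= /cc ?expg0 ?expg1 ?mulg1 ?mul1g | by vm_compute .. ].
move/eqP => -> psi.
refine (@main_case gT E P G a b p _ M M0 psi S X Y g9 gnil _ _ _ _ _ _ _ _ pr_p p5 defE oa ob cardP defG);
  [ by rewrite /= /cc ?expg0 ?expg1 ?mulg1 ?mul1g | by rewrite /= /cc ?expg0 ?expg1 ?mulg1 ?mul1g | by vm_compute .. ].
Qed.
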